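(* Let $(V,\tau)$ be a topological mixed lattice space. Then: (a) the cones $V_p$ and $V_{sp}$ are both closed if and only if $\tau$ is Hausdorff; (b) if $\tau$ is Hausdorff then $V$ is $(\le)$-Archimedean; (c) if $\tau$ is Hausdorff and $(x_n)$ is a $(\le)$-increasing (resp. $(\preccurlyeq)$-increasing) sequence converging to $x$ in $\tau$, then $x$ is the supremum of $\{x_n\}$ with respect to $\le$ (resp. with respect to $\preccurlyeq$); (d) if $\tau$ is locally mixed-full and $A$ is a bounded set, then $MF_1(A)$ and $MF_2(A)$ are bounded; (e) if $\tau$ is locally mixed-full then every mixed-order interval is bounded; in particular every $(\preccurlyeq)$-order interval $\{z: x\preccurlyeq z\preccurlyeq y\}$ is bounded; (f) if $S$ is a mixed lattice subspace of $V$, then its closure $\overline{S}$ is a mixed lattice subspace; (g) the closure of a quasi-ideal is a quasi-ideal, and the closure of a specific ideal is a specific ideal.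
   Context: A mixed lattice vector space $(V,\le,\preccurlyeq)$ is a real vector space $V$ with two partial orderings $\le$ (initial order) and $\preccurlyeq$ (specific order), each making $V$ a partially ordered vector space, with positive cones $V_p=\{x:0\le x\}$, $V_{sp}=\{x:0\preccurlyeq x\}$, such that: (1) for all $x,y$ the elements $x\curlyvee y=\min\{w: w\succcurlyeq x,\ w\ge y\}$ and $x\curlywedge y=\max\{w: w\preccurlyeq x,\ w\le y\}$ exist (min/max with respect to $\le$); (2) $x\preccurlyeq y$ implies $x\le y$; (3) $x\curlyvee y, x\curlywedge y\in V_{sp}$ whenever $x,y\in V_{sp}$. A topological mixed lattice space is such a $V$ with a vector topology $\tau$ making $(x,y)\mapsto x\curlyvee y$ and $(x,y)\mapsto x\curlywedge y$ continuous $V\times V\to V$. $\tau$ is locally mixed-full if every neighborhood of zero contains a neighborhood $W$ of zero with ($y\in W$, $0\preccurlyeq x\le y$) $\Rightarrow x\in W$. $MF_1(A)=\{y: x\preccurlyeq y\le z\text{ for some }x,z\in A\}$, $MF_2(A)=\{y: x\le y\preccurlyeq z\text{ for some }x,z\in A\}$. $V$ is $(\le)$-Archimedean if $nx\le y$ for all $n\in\mathbb N$ implies $x\le 0$. A sequence is $(\le)$-increasing if $x_n\le x_m$ for $n\le m$ (similarly $(\preccurlyeq)$-increasing). Mixed-order intervals are sets $\{x: z\preccurlyeq x\le y\}$ and $\{x: z\le x\preccurlyeq y\}$. A mixed lattice subspace is a linear subspace closed under $\curlyvee$ and $\curlywedge$. A quasi-ideal is a mixed lattice subspace $A$ such that $x\in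 A$ and $0\preccurlyeq y\le x$ imply $y\in A$. A specific ideal is a mixed lattice subspace $A$ such that $x\in A$ and $0\preccurlyeq y\preccurlyeq x$ imply $y\in A$. *)

(* Defs.v *)
From HB Require Import structures.
From mathcomp Require Import all_boot all_order all_algebra.
From mathcomp Require Import all_classical all_reals all_analysis.
Set Implicit Arguments. Unset Strict Implicit. Unset Printing Implicit Defensive.
Import Order.TTheory GRing.Theory Num.Theory.
Local Open Scope classical_set_scope.
Local Open Scope ring_scope.

Section MixedLattice.
Variables (R : realType) (V : topologicalLmodType R).

Definition ordered_vector_order (le : V -> V -> Prop) : Prop :=
  [/\ (forall x, le x x),
      (forall x y, le x y -> le y x -> x = y),
      (forall x y z, le x y -> le y z -> le x z),
      (forall x y z, le x y -> le (x + z) (y + z)) &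
      (forall (r : R) x y, 0 <= r -> le x y -> le (r *: x) (r *: y))].

(* (V, le, sle) is a mixed lattice vector space, where [ju x y] is the upper
   mixed envelope x ⋎ y = min_(le) {w | sle x w, le y w} and [mi x y] is the
   lower mixed envelope x ⋏ y = max_(le) {w | sle w x, le w y}. *)
Definition mixed_lattice_space (le sle : V -> V -> Prop) (ju mi : V -> V -> V)
  : Prop :=
  [/\ ordered_vector_order le /\ ordered_vector_order sle,
      (forall x y, [/\ sle x (ju x y), le y (ju x y) &
         forall w, sle x w -> le y w -> le (ju x y) w]),
      (forall x y, [/\ sle (mi x y) x, le (mi x y) y &
         forall w, sle w x -> le w y -> le w (mi x y)]),
      (forall x y, sle x y -> le x y) &
      (forall x y, sle 0 x -> sle 0 y -> sle 0 (ju x y) /\ sle 0 (mi x y))].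

Definition mixed_ops_continuous (ju mi : V -> V -> V) : Prop :=
  continuous (fun p : V * V => ju p.1 p.2) /\
  continuous (fun p : V * V => mi p.1 p.2).

Definition locally_mixed_full (le sle : V -> V -> Prop) : Prop :=
  forall U, nbhs (0 : V) U -> exists W, [/\ nbhs (0 : V) W, W `<=` U &
    forall x y, W y -> sle 0 x -> le x y -> W x].

Definition tvs_bounded (A : set V) : Prop :=
  forall U, nbhs (0 : V) U -> exists r : R, 0 < r /\
    forall t : R, r < t -> A `<=` [set t *: u | u in U].

Definition MF1 (le sle : V -> V -> Prop) (A : set V) : set V :=
  [set y | exists x z, [/\ A x, A z, sle x y & le y z]].
Definition MF2 (le sle : V -> V -> Prop) (A : set V) : set V :=
  [set y | exists x z, [/\ A x, A z, le x y & sle y z]].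

Definition le_Archimedean (le : V -> V -> Prop) : Prop :=
  forall x y, (forall n : nat, le (x *+ n.+1) y) -> le x 0.

Definition is_sup_of (le : V -> V -> Prop) (S : set V) (x : V) : Prop :=
  (forall s, S s -> le s x) /\ (forall w, (forall s, S s -> le s w) -> le x w).

Definition incr_seq_wrt (le : V -> V -> Prop) (u : nat -> V) : Prop :=
  forall n m, (n <= m)%N -> le (u n) (u m).

Definition linear_subspace (S : set V) : Prop :=
  [/\ S 0, (forall x y, S x -> S y -> S (x + y)) &
      (forall (r : R) x, S x -> S (r *: x))].

Definition mixed_lattice_subspace (ju mi : V -> V -> V) (S : set V) : Prop :=
  [/\ linear_subspace S, (forall x y, S x -> S y -> S (ju x y)) &
      (forall x y, S x -> S y -> S (mi x y))].

Definition quasi_ideal (le sle : V -> V -> Prop) (ju mi : V -> V -> V)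
  (A : set V) : Prop :=
  mixed_lattice_subspace ju mi A /\
  forall x y, A x -> sle 0 y -> le y x -> A y.

Definition specific_ideal (sle : V -> V -> Prop) (ju mi : V -> V -> V)
  (A : set V) : Prop :=
  mixed_lattice_subspace ju mi A /\
  forall x y, A x -> sle 0 y -> sle y x -> A y.

End MixedLattice.

(* Main.v *)
Require Import Defs.
From HB Require Import structures.
From mathcomp Require Import all_boot all_order all_algebra.
From mathcomp Require Import all_classical all_reals all_analysis.
Import Order.TTheory GRing.Theory Num.Theory.
Local Open Scope classical_set_scope.
Local Open Scope ring_scope.
Section Helpers.
Set Implicit Arguments. Unset Strict Implicit.

Lemma cl2 (R : realType) (V : topologicalLmodType R) (f : V * V -> V) x y
  (A B C : set V) : {for (x, y), continuous f} -> closure A x -> closure B y ->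
  (forall a b, A a -> B b -> C (f (a, b))) -> closure C (f (x, y)).
Proof.
move=> fc cA cB H N /fc [[P Q] /= [nP nQ] sub].
have [a [Aa Pa]] := cA _ nP; have [b [Bb Qb]] := cB _ nQ.
by exists (f (a, b)); split; [exact: H | exact: (sub (a, b))].
Qed.

Lemma cl1 (R : realType) (V : topologicalLmodType R) (f : V -> V) x
  (A B : set V) : {for x, continuous f} -> closure A x ->
  (forall a, A a -> B (f a)) -> closure B (f x).
Proof.
move=> fc cA H N /fc nN.
have [a [Aa Pa]] := cA _ nN.
by exists (f a); split; [exact: H | exact: Pa].
Qed.

Lemma pair_cont (R : realType) (V : topologicalLmodType R) (c : V) :
  continuous (fun x : V => (c, x)).
Proof. by move=> x; apply: cvg_pair; [exact: cvg_cst | exact: cvg_id]. Qed.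

Lemma pair_contl (R : realType) (V : topologicalLmodType R) (c : V) :
  continuous (fun x : V => (x, c)).
Proof. by move=> x; apply: cvg_pair; [exact: cvg_id | exact: cvg_cst]. Qed.

Lemma haus_closed0 (R : realType) (V : topologicalLmodType R) :
  closed [set (0:V)] -> hausdorff_space V.
Proof.
move=> c0 p q clpq; apply: contrapT => pq.
have o : open (~` [set (0:V)]) by exact: closed_openC.
have : nbhs (p - q) (~` [set (0:V)]).
  by apply: open_nbhs_nbhs; split => //=; apply/eqP; rewrite subr_eq0; apply/eqP.
move=> /(@sub_continuous _ (p, q)) [[P Q] /= [nP nQ] sub].
have [z [Pz Qz]] := clpq _ _ nP nQ.
by have := sub (z, z) (conj Pz Qz); rewrite /= subrr.
Qed.

Lemma closed0_haus (R : realType) (V : topologicalLmodType R) :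
  hausdorff_space V -> closed [set (0:V)].
Proof.
move=> H x cx; apply: H => A B nA nB.
have [z [-> Az]] := cx _ nA.
by exists 0; split => //; exact: nbhs_singleton.
Qed.

Lemma closed_preim0 (R : realType) (V : topologicalLmodType R) (f : V -> V) :
  hausdorff_space V -> continuous f -> closed [set x | f x = 0].
Proof.
move=> H fc.
have -> : [set x | f x = 0] = f @^-1` [set 0] by [].
by apply: preimage_closed; [move=> x _; exact: fc | exact: closed0_haus].
Qed.

Lemma cvg_subc (R : realType) (V : topologicalLmodType R) (u : nat -> V) x c :
  u @ \oo --> x -> (fun n => u n - c) @ \oo --> x - c.
Proof.
move=> ux; apply: (@continuous2_cvg _ _ _ _ _ _ u (fun=> c) (fun a b => a - b)).
- exact: (@sub_continuous _ (x, c)).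
- exact: ux.
- exact: cvg_cst.
Qed.

Lemma cvg_csub (R : realType) (V : topologicalLmodType R) (u : nat -> V) x c :
  u @ \oo --> x -> (fun n => c - u n) @ \oo --> c - x.
Proof.
move=> ux; apply: (@continuous2_cvg _ _ _ _ _ _ (fun=> c) u (fun a b => a - b)).
- exact: (@sub_continuous _ (c, x)).
- exact: cvg_cst.
- exact: ux.
Qed.

Lemma cvg_harm_scale (R : realType) (V : topologicalLmodType R) (y : V) :
  (fun n : nat => (n.+1%:R^-1 : R) *: y) @ \oo --> 0.
Proof.
have -> : (0 : V) = (0 : R) *: y by rewrite scale0r.
apply: (@continuous2_cvg _ R^o V V _ _ (fun n => (n.+1%:R^-1 : R)) (fun=> y)
  (fun (a : R^o) b => a *: b)).
- exact: (@scale_continuous _ _ (0, y)).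
- exact: (@cvg_harmonic R).
- exact: cvg_cst.
Qed.
Section Ord.
Set Implicit Arguments.
Variables (R : realType) (V : topologicalLmodType R) (le : V -> V -> Prop).
Hypothesis O : ordered_vector_order le.

Lemma o_refl x : le x x. Proof. by case: O => h _ _ _ _; exact: h. Qed.
Lemma o_anti x y : le x y -> le y x -> x = y. Proof. by case: O => _ h _ _ _; exact: h. Qed.
Lemma o_trans x y z : le x y -> le y z -> le x z.
Proof. by case: O => _ _ h _ _; exact: h. Qed.
Lemma o_add x y z : le x y -> le (x + z) (y + z). Proof. by case: O => _ _ _ h _; exact: h. Qed.
Lemma o_scale (r : R) x y : 0 <= r -> le x y -> le (r *: x) (r *: y).
Proof. by case: O => _ _ _ _ h; exact: h. Qed.
Lemma o_sub0 x y : le x y -> le 0 (y - x).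
Proof. by move=> /(@o_add _ _ (- x)); rewrite subrr. Qed.
Lemma o_of_sub0 x y : le 0 (y - x) -> le x y.
Proof. by move=> /(@o_add _ _ x); rewrite add0r subrK. Qed.
Lemma o_subl x y z : le y z -> le (y - x) (z - x).
Proof. exact: o_add. Qed.
Lemma o_subr x y z : le x y -> le (z - y) (z - x).
Proof.
move=> /o_sub0 h; apply: o_of_sub0.
by have -> : z - x - (z - y) = y - x by rewrite opprB addrC addrA subrK.
Qed.
End Ord.

Lemma pairc (T U W : topologicalType) (f : T -> U) (g : T -> W) :
  continuous f -> continuous g -> continuous (fun a => (f a, g a)).
Proof. by move=> fc gc a; apply: cvg_pair; [exact: fc | exact: gc]. Qed.

Lemma cont_comp2 (T U W Z : topologicalType) (F : U * W -> Z) f g :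
  continuous F -> continuous f -> continuous g ->
  continuous (fun a : T => F (f a, g a)).
Proof.
move=> Fc fc gc a.
apply: (@continuous_comp _ _ _ (fun a => (f a, g a)) F).
  exact: pairc.
exact: Fc.
Qed.

Lemma sup_lim (R : realType) (V : topologicalLmodType R) (lo : V -> V -> Prop)
  (u : nat -> V) x : ordered_vector_order lo -> closed [set z | lo 0 z] ->
  incr_seq_wrt lo u -> u @ \oo --> x -> is_sup_of lo (range u) x.
Proof.
move=> O cl incr ux; split.
  move=> s [n _ <-]; apply: (o_of_sub0 O).
  apply: (closed_cvg _ cl _ _ (@cvg_subc _ _ u x (u n) ux)).
  by exists n => // m /= nm; apply: (o_sub0 O); exact: incr.
move=> w ub; apply: (o_of_sub0 O).
apply: (closed_cvg _ cl _ _ (@cvg_csub _ _ u x w ux)).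
by apply: nearW => m /=; apply: (o_sub0 O); apply: ub; exists m.
Qed.

Lemma nbhs_split (R : realType) (V : topologicalLmodType R) (U : set V) :
  nbhs 0 U -> exists U1, nbhs 0 U1 /\
    forall a c, U1 a -> U1 c -> U (a + c) /\ U (a - c).
Proof.
move=> nU.
have /(@add_continuous V (0, 0)) [[P Q] /= [nP nQ] sP] : nbhs ((0:V) + 0) U
  by rewrite addr0.
have /(@sub_continuous V (0, 0)) [[P' Q'] /= [nP' nQ'] sP'] : nbhs ((0:V) - 0) U
  by rewrite subr0.
exists (P `&` Q `&` (P' `&` Q')); split.
  by apply: filterI; apply: filterI.
move=> a c [[Pa Qa] [P'a Q'a]] [[Pc Qc] [P'c Q'c]]; split.
  exact: (sP (a, c)).
exact: (sP' (a, c)).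
Qed.

Lemma pt_bounded (R : realType) (V : topologicalLmodType R) (z : V) :
  tvs_bounded [set z].
Proof.
move=> U nU.
have /(@scale_continuous R V (0, z)) [[P Q] /= [nP nQ] sP] :
  nbhs ((0:R) *: z) U by rewrite scale0r.
move: nP => /nbhs_ballP [e /= e0 Pe].
exists e^-1; split; first by rewrite invr_gt0.
move=> t et w ->.
have t0 : 0 < t by apply: lt_trans et; rewrite invr_gt0.
exists (t^-1 *: z); last by rewrite scalerA mulfV ?gt_eqF // scale1r.
apply: (sP (t^-1, z)); split; last exact: nbhs_singleton.
apply: Pe; rewrite /ball /= sub0r normrN gtr0_norm ?invr_gt0 //.
move: et; rewrite -[e^-1]mul1r ltr_pdivrMr // => et.
by rewrite -[t^-1]mul1r ltr_pdivrMr // mulrC.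
Qed.
End Helpers.

Section Main.
Set Implicit Arguments. Unset Strict Implicit.
Variables (R : realType) (V : topologicalLmodType R)
  (le sle : V -> V -> Prop) (ju mi : V -> V -> V).

Lemma bnd_sub (A B : set V) : tvs_bounded B -> A `<=` B -> tvs_bounded A.
Proof.
move=> bB AB U nU; have [r [r0 H]] := bB U nU.
by exists r; split => // t rt w /AB; exact: H.
Qed.

Lemma bnd_pair (z y : V) : tvs_bounded [set w | w = z \/ w = y].
Proof.
move=> U nU.
have [r1 [r10 H1]] := pt_bounded z nU.
have [r2 [r20 H2]] := pt_bounded y nU.
exists (r1 + r2); split; first exact: addr_gt0.
move=> t rt w [->|->].
  by apply: H1 => //; apply: lt_trans rt; rewrite ltrDl.
by apply: H2 => //; apply: lt_trans rt; rewrite ltrDr.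
Qed.

Lemma bnd_MF (Ole : ordered_vector_order le) (Osle : ordered_vector_order sle)
  : locally_mixed_full le sle -> forall A : set V, tvs_bounded A ->
        tvs_bounded (MF1 le sle A) /\ tvs_bounded (MF2 le sle A).
Proof.
move=> lmf A bA.
suff key : forall U, nbhs 0 U -> exists r : R, 0 < r /\ forall t, r < t ->
  (MF1 le sle A `<=` [set t *: u | u in U]) /\
  (MF2 le sle A `<=` [set t *: u | u in U]).
  split => U nU; have [r [r0 H]] := key U nU; exists r; split => // t rt;
  by have [] := H t rt.
move=> U nU.
have [U1 [nU1 HU1]] := nbhs_split nU.
have [W [nW WU1 Wf]] := lmf U1 nU1.
have [W2 [nW2 HW2]] := nbhs_split nW.
have [r [r0 HA]] := bA (W2 `&` U1) (filterI nW2 nU1).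
exists r; split => // t rt.
have t0 : 0 < t by apply: lt_trans rt.
have ti0 : 0 <= t^-1 by rewrite invr_ge0 ltW.
have tK : forall v : V, t *: (t^-1 *: v) = v.
  by move=> v; rewrite scalerA mulfV ?gt_eqF // scale1r.
have tK' : forall v : V, t^-1 *: (t *: v) = v.
  by move=> v; rewrite scalerA mulVf ?gt_eqF // scale1r.
split.
- move=> y [x [z [Ax Az sxy lyz]]].
  have [a [W2a U1a] xa] := HA t rt x Ax.
  have [b [W2b U1b] zb] := HA t rt z Az.
  pose d := t^-1 *: (y - x).
  have Wd : W d.
    apply: (Wf d (b - a)); first by have [_ ] := HW2 b a W2b W2a.
      rewrite /d -(scaler0 _ t^-1); apply: (o_scale Osle) => //.
      exact: (o_sub0 Osle).
    have -> : b - a = t^-1 *: (z - x) by rewrite -xa -zb scalerBr !tK'.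
    by apply: (o_scale Ole) => //; exact: (o_subl Ole).
  exists (a + d); first by have [] := HU1 a d U1a (WU1 _ Wd).
  by rewrite scalerDr xa /d tK addrC subrK.
- move=> y [x [z [Ax Az lxy syz]]].
  have [a [W2a U1a] xa] := HA t rt x Ax.
  have [b [W2b U1b] zb] := HA t rt z Az.
  pose d := t^-1 *: (z - y).
  have Wd : W d.
    apply: (Wf d (b - a)); first by have [_ ] := HW2 b a W2b W2a.
      rewrite /d -(scaler0 _ t^-1); apply: (o_scale Osle) => //.
      exact: (o_sub0 Osle).
    have -> : b - a = t^-1 *: (z - x) by rewrite -xa -zb scalerBr !tK'.
    by apply: (o_scale Ole) => //; exact: (o_subr Ole).
  exists (b - d); first by have [] := HU1 b d U1b (WU1 _ Wd).
  by rewrite scalerBr zb /d tK opprB addrC subrK.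
Qed.

End Main.

Section Main2.
Set Implicit Arguments. Unset Strict Implicit.
Variables (R : realType) (V : topologicalLmodType R)
  (le sle : V -> V -> Prop) (ju mi : V -> V -> V).

Lemma le0_mi (HV : mixed_lattice_space le sle ju mi) x :
  le 0 x <-> mi 0 x = 0.
Proof.
case: HV => [[Ole Osle] Hju Hmi Hsle Hpos]; have [m1 m2 m3] := Hmi 0 x.
split=> [h|h]; last by rewrite -h.
apply: (o_anti Ole); first exact: Hsle.
by apply: m3 => //; exact: (o_refl Osle).
Qed.

Lemma sle0_mi (HV : mixed_lattice_space le sle ju mi) x :
  sle 0 x <-> mi x 0 = 0.
Proof.
case: HV => [[Ole Osle] Hju Hmi Hsle Hpos]; have [m1 m2 m3] := Hmi x 0.
split=> [h|h]; last by rewrite -h.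
apply: (o_anti Ole) => //.
by apply: m3 => //; exact: (o_refl Ole).
Qed.

Lemma closure_mls (Htop : mixed_ops_continuous ju mi) (S : set V) :
  mixed_lattice_subspace ju mi S -> mixed_lattice_subspace ju mi (closure S).
Proof.
case: Htop => cju cmi [[S0 SD SZ] Sju Smi]; split; first split.
- exact: subset_closure.
- move=> x y cx cy.
  exact: (cl2 (f := fun p : V * V => p.1 + p.2) (@add_continuous V (x, y)) cx cy).
- move=> r x cx.
  have sc : continuous (fun v : V => r *: v).
    apply: (@cont_comp2 _ R^o V V (fun p : R^o * V => p.1 *: p.2)).
    + exact: scale_continuous.
    + exact: cst_continuous.
    + by move=> ?; exact: cvg_id.
  apply: (cl1 (f := fun v : V => r *: v) (sc x) cx).
  by move=> a Sa; exact: SZ.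
- move=> x y cx cy.
  exact: (cl2 (f := fun p : V * V => ju p.1 p.2) (cju (x, y)) cx cy).
- move=> x y cx cy.
  exact: (cl2 (f := fun p : V * V => mi p.1 p.2) (cmi (x, y)) cx cy).
Qed.

Lemma cont_mi_ju (Htop : mixed_ops_continuous ju mi) (f g : V -> V) :
  continuous f -> continuous g ->
  continuous (fun a => mi (f a) (g a)) /\ continuous (fun a => ju (f a) (g a)).
Proof.
case: Htop => cju cmi fc gc; split.
  exact: (@cont_comp2 _ V V V (fun p : V * V => mi p.1 p.2)).
exact: (@cont_comp2 _ V V V (fun p : V * V => ju p.1 p.2)).
Qed.

Lemma idc : continuous (fun a : V => a).
Proof. by move=> ?; exact: cvg_id. Qed.

Lemma closure_qi (HV : mixed_lattice_space le sle ju mi)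
  (Htop : mixed_ops_continuous ju mi) (A : set V) :
  quasi_ideal le sle ju mi A -> quasi_ideal le sle ju mi (closure A).
Proof.
move=> [mA qA]; split; first exact: closure_mls.
case: (mA) => [[A0 _ _] Aju _].
case: HV => [[Ole Osle] Hju Hmi Hsle Hpos] x y cx sy yx.
have jc : continuous (fun a => ju 0 a).
  by have [] := cont_mi_ju Htop (@cst_continuous _ _ 0) idc.
have gc : continuous (fun a => mi y (ju 0 a)).
  by have [] := cont_mi_ju Htop (@cst_continuous _ _ y) jc.
have -> : y = mi y (ju 0 x).
  have [_ j2 _] := Hju 0 x.
  have yj : le y (ju 0 x) by apply: (o_trans Ole) yx j2.
  have [m1 m2 m3] := Hmi y (ju 0 x).
  apply: (o_anti Ole); first by apply: m3 => //; exact: (o_refl Osle).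
  exact: Hsle.
apply: (cl1 (f := fun a => mi y (ju 0 a)) (gc x) cx) => a Aa.
have [j1 _ _] := Hju 0 a; have [_ m2 _] := Hmi y (ju 0 a).
apply: (qA (ju 0 a)); first exact: Aju.
  by have [] := Hpos _ _ sy j1.
exact: m2.
Qed.

Lemma closure_si (HV : mixed_lattice_space le sle ju mi)
  (Htop : mixed_ops_continuous ju mi) (A : set V) :
  specific_ideal sle ju mi A -> specific_ideal sle ju mi (closure A).
Proof.
move=> [mA qA]; split; first exact: closure_mls.
case: (mA) => [[A0 _ _] Aju _].
case: HV => [[Ole Osle] Hju Hmi Hsle Hpos] x y cx sy yx.
have jc : continuous (fun a => ju 0 a).
  by have [] := cont_mi_ju Htop (@cst_continuous _ _ 0) idc.
have gc : continuous (fun a => mi (ju 0 a) y).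
  by have [] := cont_mi_ju Htop jc (@cst_continuous _ _ y).
have -> : y = mi (ju 0 x) y.
  have sx : sle 0 x by apply: (o_trans Osle) sy yx.
  have -> : ju 0 x = x.
    have [j1 j2 j3] := Hju 0 x.
    apply: (o_anti Ole) => //; apply: j3 => //; exact: (o_refl Ole).
  have [m1 m2 m3] := Hmi x y.
  apply: (o_anti Ole) => //; apply: m3 => //; exact: (o_refl Ole).
apply: (cl1 (f := fun a => mi (ju 0 a) y) (gc x) cx) => a Aa.
have [j1 _ _] := Hju 0 a; have [m1 _ _] := Hmi (ju 0 a) y.
apply: (qA (ju 0 a)); first exact: Aju.
  by have [] := Hpos _ _ j1 sy.
exact: m1.
Qed.

End Main2.

Theorem theorem3p16 (R : realType) (V : topologicalLmodType R)
  (le sle : V -> V -> Prop) (ju mi : V -> V -> V)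
  (HV : mixed_lattice_space le sle ju mi)
  (Htop : mixed_ops_continuous ju mi) :
  (* (a) *)
  ((closed [set x | le 0 x] /\ closed [set x | sle 0 x]) <-> hausdorff_space V)
  (* (b) *)
  /\ (hausdorff_space V -> le_Archimedean le)
  (* (c) *)
  /\ (hausdorff_space V -> forall (u : nat -> V) (x : V), u @ \oo --> x ->
        (incr_seq_wrt le u -> is_sup_of le (range u) x) /\
        (incr_seq_wrt sle u -> is_sup_of sle (range u) x))
  (* (d) *)
  /\ (locally_mixed_full le sle -> forall A : set V, tvs_bounded A ->
        tvs_bounded (MF1 le sle A) /\ tvs_bounded (MF2 le sle A))
  (* (e) *)
  /\ (locally_mixed_full le sle -> forall z y : V,
        [/\ tvs_bounded [set x | sle z x /\ le x y],
            tvs_bounded [set x | le z x /\ sle x y] &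
            tvs_bounded [set x | sle z x /\ sle x y]])
  (* (f) *)
  /\ (forall S : set V, mixed_lattice_subspace ju mi S ->
        mixed_lattice_subspace ju mi (closure S))
  (* (g) *)
  /\ (forall A : set V, quasi_ideal le sle ju mi A ->
        quasi_ideal le sle ju mi (closure A))
  /\ (forall A : set V, specific_ideal sle ju mi A ->
        specific_ideal sle ju mi (closure A)).
Proof.
have HV' := HV.
case: HV' => [[Ole Osle] Hju Hmi Hsle Hpos].
have [cju cmi] := Htop.
have clH : hausdorff_space V ->
    closed [set x | le 0 x] /\ closed [set x | sle 0 x].
  move=> H; split.
    have -> : [set x | le 0 x] = [set x | mi 0 x = 0].
      by apply/seteqP; split => x /= /(le0_mi HV).
    apply: closed_preim0 => //.
    by have [] := cont_mi_ju Htop (@cst_continuous _ _ 0) (@idc _ V).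
  have -> : [set x | sle 0 x] = [set x | mi x 0 = 0].
    by apply/seteqP; split => x /= /(sle0_mi HV).
  apply: closed_preim0 => //.
  by have [] := cont_mi_ju Htop (@idc _ V) (@cst_continuous _ _ 0).
split.
  split; last exact: clH.
  move=> [c1 _]; apply: haus_closed0.
  have -> : [set (0:V)] = [set x | le 0 x] `&` ((-%R) @^-1` [set x | le 0 x]).
    apply/seteqP; split => x /=.
      move=> ->; rewrite oppr0; split; exact: (o_refl Ole).
    move=> [h1 h2]; apply: (o_anti Ole) => //.
    by apply: (o_of_sub0 Ole); rewrite sub0r.
  apply: closedI => //.
  apply: preimage_closed => // x _; exact: opp_continuous.
split.
  move=> H x y Hn; have [c1 _] := clH H.
  apply: (o_of_sub0 Ole); rewrite sub0r.
  have := @cvg_subc _ _ _ _ x (cvg_harm_scale y); rewrite sub0r => cv.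
  apply: (closed_cvg _ c1 _ _ cv); apply: nearW => n /=.
  apply: (o_sub0 Ole).
  have := o_scale Ole (ltW (@harmonic_gt0 R n)) (Hn n).
  rewrite /harmonic /=.
  rewrite -[x *+ n.+1]scaler_nat scalerA mulVf ?scale1r //.
split.
  move=> H u x ux; have [c1 c2] := clH H; split => incr.
    exact: sup_lim.
  exact: sup_lim.
split.
  exact: bnd_MF.
split.
  move=> lmf z y.
  have [b1 b2] := bnd_MF Ole Osle lmf (bnd_pair z y).
  have i1 : tvs_bounded [set x | sle z x /\ le x y].
    apply: (bnd_sub b1) => x [h1 h2]; exists z, y; split => //; [left|right] => //.
  split => //.
    apply: (bnd_sub b2) => x [h1 h2]; exists z, y; split => //; [left|right] => //.
  apply: (bnd_sub i1) => x [h1 h2]; split => //; exact: Hsle.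
split.
  by move=> S; exact: closure_mls.
split.
  by move=> A; exact: (closure_qi HV Htop).
by move=> A; exact: (closure_si HV Htop).
Qed.
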